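(* The Iterated Relaxation Procedure (described in the context) returns a set $M'\in\mathcal I$ such that for every $v\in V$, $$\sum_{e\in\delta_{M'}(v)\setminus L(v)}d_{v,e}\le b_v,$$ where $\delta_{M'}(v)=\delta(v)\cap M'$ and $L(v)$ denotes a set of $\min\{k,|\delta_{M'}(v)|\}$ edges $e\in\delta_{M'}(v)$ with greatest demand $d_{v,e}$.
   Context: Setting: a hypergraph $G=(V,E)$ with every hyperedge having at most $k$ endpoints, capacities $b_v\ge0$, demands $d_{v,e}\ge0$ for each hyperedge $e$ and endpoint $v\in e$, profits $p_e\ge0$, and a matroid $\mathcal M=(E,\mathcal I)$ given by an independence oracle; $\delta(v)$ is the set of hyperedges containing $v$. For $W\subseteq V$, $F\subseteq E$, a matroid $\mathcal M'$ on ground set $F$ with rank function $r_{\mathcal M'}$, and values $b'_v$ ($v\in W$), let $LP[W,F,\mathcal M',b']$ be $\max\{\sum_{e\in F}p_ex_e: \sum_{e\in\delta_F(v)}d_{v,e}x_e\le b'_v\ \forall v\in W,\ x(A)\le r_{\mathcal M'}(A)\ \forall A\subseteq F,\ x\ge0\}$, where $\delta_F(v)=\delta(v)\cap F$ and $x(A)=\sum_{e\in A}x_e$. $\mathcal M'-e$ denotes deletion and $\mathcal M'/e$ contraction. Iterated Relaxation Procedure: start with $W=V$, $F=E$, $\mathcal M'=\mathcal M$, $b'_v=b_v$, $M'=\emptyset$. While $F\neq\emptyset$: compute an optimal extreme point $x^*$ of $LP[W,F,\mathcal M',b']$; if $x^*_e=0$ for some $e\in F$, set $F\leftarrow F-\{e\}$,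 $\mathcal M'\leftarrow\mathcal M'-e$; else if $x^*_e=1$ for some $e\in F$, set $F\leftarrow F-\{e\}$, $\mathcal M'\leftarrow\mathcal M'/e$, $M'\leftarrow M'\cup\{e\}$ and $b'_v\leftarrow b'_v-d_{v,e}$ for each endpoint $v$ of $e$; otherwise remove from $W$ a vertex $v\in W$ minimizing $|\delta_F(v)|-x^*(\delta_F(v))$. Return $M'$. *)

(* Defs.v *)
From HB Require Import structures.
From mathcomp Require Import all_boot all_order all_algebra.
Set Implicit Arguments. Unset Strict Implicit. Unset Printing Implicit Defensive.
Import Order.TTheory GRing.Theory Num.Theory.
Local Open Scope ring_scope.

Section IRP.
Variables (R : realFieldType) (V E : finType).
(* hypergraph: inc v e  <=>  v is an endpoint of hyperedge e *)
Variable inc : V -> E -> bool.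
Variables (d : V -> E -> R) (p : E -> R).

Definition is_matroid (indep : {set E} -> bool) : Prop :=
  [/\ indep set0,
      (forall A B : {set E}, A \subset B -> indep B -> indep A) &
      (forall A B : {set E}, indep A -> indep B -> #|A| < #|B| ->
         exists2 x, x \in B :\: A & indep (x |: A))]%N.

Definition rk (indep : {set E} -> bool) (A : {set E}) : nat :=
  \max_(B : {set E} | (B \subset A) && indep B) #|B|.

(* deletion M - e and contraction M / e (contraction of a loop = deletion) *)
Definition mdel (indep : {set E} -> bool) (e : E) : {set E} -> bool :=
  fun A => (e \notin A) && indep A.
Definition mcon (indep : {set E} -> bool) (e : E) : {set E} -> bool :=
  fun A => (e \notin A) && (if indep [set e] then indep (e |: A) else indep A).

Definition deltaF (F : {set E}) (v : V) : {set E} := [set e in F | inc v e].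

(* State of the procedure: W, F, current matroid M' (on ground set F),
   residual capacities b', and the set M' being built. *)
Record state := State {
  sW : {set V};
  sF : {set E};
  sI : {set E} -> bool;
  sb : {ffun V -> R};
  sM : {set E} }.

(* feasibility in LP[W,F,M',b'] ; vectors x in R^F are represented as
   x : E -> R vanishing outside F *)
Definition lp_feasible (s : state) (x : {ffun E -> R}) : Prop :=
  [/\ (forall e, e \notin sF s -> x e = 0),
      (forall e, 0 <= x e),
      (forall v, v \in sW s -> \sum_(e in deltaF (sF s) v) d v e * x e <= sb s v) &
      (forall A : {set E}, A \subset sF s -> \sum_(e in A) x e <= (rk (sI s) A)%:R)].

Definition lp_obj (x : {ffun E -> R}) : R := \sum_(e : E) p e * x e.

Definition lp_extreme (s : state) (x : {ffun E -> R}) : Prop :=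
  lp_feasible s x /\
  forall y z, lp_feasible s y -> lp_feasible s z ->
    (forall e, x e = (y e + z e) / 2) -> y = z.

Definition lp_opt_extreme (s : state) (x : {ffun E -> R}) : Prop :=
  lp_extreme s x /\ forall y, lp_feasible s y -> lp_obj y <= lp_obj x.

Definition slack (F : {set E}) (x : {ffun E -> R}) (v : V) : R :=
  (#|deltaF F v|)%:R - \sum_(e in deltaF F v) x e.

Definition upd_b (b' : {ffun V -> R}) (e : E) : {ffun V -> R} :=
  [ffun u => if inc u e then b' u - d u e else b' u].

Definition step (s s' : state) : Prop :=
  sF s != set0 /\
  exists x, lp_opt_extreme s x /\
  [\/ exists2 e, e \in sF s & x e = 0 /\
         s' = State (sW s) (sF s :\ e) (mdel (sI s) e) (sb s) (sM s),
      (forall e, e \in sF s -> x e != 0) /\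
      exists2 e, e \in sF s & x e = 1 /\
         s' = State (sW s) (sF s :\ e) (mcon (sI s) e) (upd_b (sb s) e) (e |: sM s)
    | (forall e, e \in sF s -> x e != 0 /\ x e != 1) /\
      exists2 v, v \in sW s &
        (forall u, u \in sW s -> slack (sF s) x v <= slack (sF s) x u) /\
         s' = State (sW s :\ v) (sF s) (sI s) (sb s) (sM s)].

Definition init_state (indep : {set E} -> bool) (b : V -> R) : state :=
  State setT setT indep [ffun v => b v] set0.

Inductive reachable (s0 : state) : state -> Prop :=
  | reach0 : reachable s0 s0
  | reachS s s' : reachable s0 s -> step s s' -> reachable s0 s'.

Definition top_demand (k : nat) (M : {set E}) (v : V) (L : {set E}) : Prop :=
  [/\ L \subset deltaF M v,
      #|L| = minn k #|deltaF M v| &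
      (forall e f, e \in L -> f \in deltaF M v :\: L -> d v f <= d v e)].

End IRP.

(* Main.v *)
Require Import Defs.
From HB Require Import structures.
From mathcomp Require Import all_boot all_order all_algebra.
From mathcomp Require Import ring lra.
From Stdlib Require Import Classical ClassicalEpsilon FunctionalExtensionality.
Import Order.TTheory GRing.Theory Num.Theory.
Set Implicit Arguments. Unset Strict Implicit. Unset Printing Implicit Defensive.

Section Mat.
Variables (E : finType) (I : {set E} -> bool).
Hypothesis HI : is_matroid I.

Lemma rk_ub (B A : {set E}) : B \subset A -> I B -> (#|B| <= rk I A)%N.
Proof.
move=> BA IB; rewrite /rk.
exact: (@leq_bigmax_cond _ (fun C : {set E} => (C \subset A) && I C) (fun C => #|C|) B (introT andP (conj BA IB))).
Qed.

Lemma rk_wit (A : {set E}) : exists B : {set E}, [/\ B \subset A, I B & #|B| = rk I A].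
Proof.
case: HI => I0 _ _.
have : (0 < #|[pred B : {set E} | (B \subset A) && I B]|)%N.
  by apply/card_gt0P; exists set0; rewrite inE sub0set I0.
case/(eq_bigmax_cond (fun B : {set E} => #|B|)) => B; rewrite inE => /andP[BA IB] H.
by exists B; split=> //; rewrite /rk H.
Qed.

Lemma rk_le (A : {set E}) : (rk I A <= #|A|)%N.
Proof. by have [B [BA _ <-]] := rk_wit A; apply: subset_leq_card. Qed.

Lemma rk_mono (A B : {set E}) : A \subset B -> (rk I A <= rk I B)%N.
Proof.
move=> AB; have [C [CA IC <-]] := rk_wit A; apply: rk_ub => //; exact: subset_trans AB.
Qed.

Lemma rk_loop (e : E) : ~~ I [set e] -> rk I [set e] = 0%N.
Proof.
move=> Ne; apply/eqP; rewrite -leqn0; apply/bigmax_leqP => B /andP[Be IB].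
rewrite leqn0 cards_eq0; move: Be; rewrite subset1 => /orP[/eqP HB|//].
by move: Ne; rewrite -HB IB.
Qed.

Lemma rk_extend (A J : {set E}) : J \subset A -> I J ->
  exists B : {set E}, [/\ J \subset B, B \subset A, I B & #|B| = rk I A].
Proof.
move=> JA IJ; case: HI => I0 Ih Ix.
pose P := fun B : {set E} => [&& J \subset B, B \subset A & I B].
have PJ : P J by rewrite /P subxx JA IJ.
case: (@arg_maxnP _ J P (fun B => #|B|) PJ) => B /and3P[JB BA IB] Hmax.
exists B; split=> //; apply/eqP; rewrite eqn_leq rk_ub //=.
have [C [CA IC HC]] := rk_wit A.
rewrite -HC leqNgt; apply/negP => Hlt.
have [x Hx Ixb] := Ix _ _ IB IC Hlt.
move: Hx; rewrite inE => /andP[xB xC].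
have : P (x |: B).
  rewrite /P Ixb andbT; apply/andP; split; first by apply: subset_trans JB (subsetUr _ _).
  by rewrite subUset sub1set (subsetP CA).
move/Hmax; rewrite cardsU1 xB /= ltnn //.
Qed.

Lemma rk_submod (A B : {set E}) : (rk I (A :|: B) + rk I (A :&: B) <= rk I A + rk I B)%N.
Proof.
case: HI => I0 Ih Ix.
have [J0 [J0s IJ0 HJ0]] := rk_wit (A :&: B).
have J0AB : J0 \subset A :|: B.
  by apply: subset_trans J0s _; apply: subset_trans (subsetIl A B) (subsetUl A B).
have [J [J0J JAB IJ HJ]] := rk_extend J0AB IJ0.
have h1 : (#|J :&: A| <= rk I A)%N by apply: rk_ub; [exact: subsetIr | apply: Ih IJ; exact: subsetIl].
have h2 : (#|J :&: B| <= rk I B)%N by apply: rk_ub; [exact: subsetIr | apply: Ih IJ; exact: subsetIl].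
have h3 : (#|J :&: A| + #|J :&: B| = #|J| + #|J :&: A :&: B|)%N.
  rewrite -cardsUI.
  have -> : J :&: A :|: J :&: B = J by rewrite -setIUr; apply/setIidPl.
  by rewrite setIACA setIid setIA.
have h4 : (#|J0| <= #|J :&: A :&: B|)%N.
  apply: subset_leq_card; rewrite -setIA subsetI J0J //.
rewrite -HJ -HJ0; apply: leq_trans (leq_add h1 h2); rewrite h3 leq_add2l //.
Qed.

End Mat.

Definition Ix (E : finType) (indep : {set E} -> bool) (F M : {set E}) :=
  fun A : {set E} => (A \subset F) && indep (A :|: M).

Lemma Ix_matroid (E : finType) (indep : {set E} -> bool) (F M : {set E}) :
  is_matroid indep -> M :&: F = set0 -> indep M -> is_matroid (Ix indep F M).
Proof.
case=> I0 Ih Ix0 MF IM; split.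
- by rewrite /Ix sub0set set0U.
- move=> A B AB /andP[BF IB]; rewrite /Ix (subset_trans AB BF) /=.
  by apply: Ih IB; apply: setSU.
- move=> A B /andP[AF IA] /andP[BF IB] Hlt.
  have dA : A :&: M = set0.
    apply/setP => x; rewrite !inE; apply/negP => /andP[xA xM].
    have : x \in M :&: F by rewrite inE xM (subsetP AF).
    by rewrite MF inE.
  have dB : B :&: M = set0.
    apply/setP => x; rewrite !inE; apply/negP => /andP[xB xM].
    have : x \in M :&: F by rewrite inE xM (subsetP BF).
    by rewrite MF inE.
  have : (#|A :|: M| < #|B :|: M|)%N.
    by rewrite !cardsU dA dB !cards0 !subn0 ltn_add2r.
  case/(Ix0 _ _ IA IB) => x; rewrite !inE => /andP[/norP[xA xM] /orP[xB|xM']] Ix1; last by rewrite xM' in xM.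
  exists x; first by rewrite inE xA xB.
  rewrite /Ix subUset sub1set (subsetP BF) //= AF /=; by rewrite -setUA.
Qed.

Local Open Scope ring_scope.

Definition pb (P : Prop) : bool :=
  if excluded_middle_informative P then true else false.
Lemma pbP (P : Prop) : reflect P (pb P).
Proof. by rewrite /pb; case: excluded_middle_informative => H; constructor. Qed.

Lemma ex_argmin (R : realDomainType) (I : finType) (P : pred I) (f : I -> R) i0 :
  P i0 -> exists2 i, P i & forall j, P j -> f i <= f j.
Proof.
move=> Pi0; case: (@arg_minP _ _ I i0 P f Pi0) => i Pi H; exists i => //.
Qed.

Lemma ex_eps (R : realFieldType) (I : finType) (P : pred I) (f : I -> R) :
  (forall i, P i -> 0 < f i) -> exists2 eps, 0 < eps & forall i, P i -> eps <= f i.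
Proof.
move=> Hp.
suff: forall s : seq I, exists2 eps, 0 < eps & forall i, i \in s -> P i -> eps <= f i.
  by case/(_ (enum I)) => eps e0 He; exists eps => // i; apply: He; rewrite mem_enum.
elim=> [|a s [eps e0 He]]; first by exists 1.
case Pa: (P a).
- exists (Num.min eps (f a)); first by rewrite lt_min e0 Hp.
  move=> i; rewrite inE; case/orP=> [/eqP->|Hs] Pi; first by rewrite ge_min lexx orbT.
  by rewrite ge_min He.
- exists eps => // i; rewrite inE; case/orP=> [/eqP->|Hs] Pi; first by rewrite Pa in Pi.
  exact: He.
Qed.

Section GLP.
Variables (R : realFieldType) (E I : finType) (g : I -> E -> R) (c : I -> R).

Definition dot (a x : E -> R) := \sum_(e : E) a e * x e.
Definition gfeas (x : E -> R) := forall i, dot (g i) x <= c i.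
Definition gtight (x : E -> R) i := dot (g i) x == c i.
Definition gbasic (x : E -> R) := gfeas x /\
  forall w : E -> R, (forall i, gtight x i -> dot (g i) w = 0) -> forall e, w e = 0.
Definition gextreme (x : E -> R) := gfeas x /\
  forall y z, gfeas y -> gfeas z -> (forall e, x e = (y e + z e) / 2) -> forall e, y e = z e.

Lemma dot_lin a x w t : dot a (fun e => x e + t * w e) = dot a x + t * dot a w.
Proof.
rewrite /dot mulr_sumr -big_split /=; apply: eq_bigr => e _; ring.
Qed.

Lemma dotB a x y : dot a (fun e => x e - y e) = dot a x - dot a y.
Proof. rewrite /dot -sumrB; apply: eq_bigr => e _; ring. Qed.

Lemma basic_extreme x : gbasic x -> gextreme x.
Proof.
case=> Fx Bx; split=> // y z Fy Fz Hm.
have Hw := Bx (fun e => y e - x e).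
have H0 : forall e, y e - x e = 0.
  apply: Hw => i /eqP Ti; rewrite dotB Ti.
  have Hyz : dot (g i) x = (dot (g i) y + dot (g i) z) / 2.
    rewrite /dot -big_split /= mulr_suml; by apply: eq_bigr => e _; rewrite Hm; field.
  have Hy := Fy i.
  have Hz := Fz i.
  have Hyc : dot (g i) y = c i.
    rewrite Ti in Hyz; lra.
  by rewrite Hyc subrr.
move=> e; have := H0 e; have := Hm e; move: (H0 e) => _ Hme /eqP; rewrite subr_eq0 => /eqP Hye.
rewrite Hye in Hme; rewrite Hye; lra.
Qed.

Lemma extreme_basic x : gextreme x -> gbasic x.
Proof.
case=> Fx Ex; split=> // w Hw.
have Hpos : forall i, ~~ gtight x i -> 0 < (c i - dot (g i) x) / (`|dot (g i) w| + 1).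
  move=> i /= Ti; apply: divr_gt0; last by rewrite ltr_wpDl.
  by rewrite subr_gt0 lt_def eq_sym Ti Fx.
have [eps e0 He] := ex_eps Hpos.
have feas : forall t, `|t| <= eps -> gfeas (fun e => x e + t * w e).
  move=> t Ht i; rewrite dot_lin.
  case Ti: (gtight x i); first by rewrite Hw // mulr0 addr0 (eqP Ti).
  have := He i; rewrite Ti => /(_ isT).
  have hpos : 0 < `|dot (g i) w| + 1 by rewrite ltr_wpDl.
  rewrite ler_pdivlMr // => H.
  have H1 : t * dot (g i) w <= `|t| * `|dot (g i) w|.
    by rewrite -normrM ler_norm.
  have H2 : `|t| * `|dot (g i) w| <= eps * (`|dot (g i) w| + 1).
    apply: ler_pM => //; rewrite ler_wpDr //.
  lra.
have Ha : `|eps| <= eps by rewrite ger0_norm // ltW.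
have Hb : `|- eps| <= eps by rewrite normrN ger0_norm // ltW.
have := Ex _ _ (feas eps Ha) (feas (- eps) Hb).
have Hm : forall e, x e = (x e + eps * w e + (x e + - eps * w e)) / 2.
  by move=> e; field.
move/(_ Hm) => H e; have := H e => /eqP.
rewrite -subr_eq0 => /eqP Hz.
have : 2 * eps * w e = 0 by rewrite -Hz; ring.
by move/eqP; rewrite !mulf_eq0 (gt_eqF e0) /= pnatr_eq0 orbF => /eqP.
Qed.

Lemma dotZ a w s : dot a (fun e => s * w e) = s * dot a w.
Proof. by rewrite /dot mulr_sumr; apply: eq_bigr => e _; ring. Qed.

Hypothesis bounded : forall w : E -> R, (exists e, w e != 0) -> exists i, 0 < dot (g i) w.
Variable p : E -> R.

Definition ntight y := [set i | ~~ gtight y i].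

Lemma push_step y : gfeas y -> ~ gbasic y ->
  exists y', [/\ gfeas y', (#|ntight y'| < #|ntight y|)%N & dot p y <= dot p y'].
Proof.
move=> Fy Nb.
have [w [Hw [e He]]] : exists w, (forall i, gtight y i -> dot (g i) w = 0) /\ exists e, w e != 0.
  apply: NNPP => H; apply: Nb; split=> // w Hw e; apply: NNPP => Hne; apply: H.
  by exists w; split=> //; exists e; apply/eqP.
pose s : R := if 0 <= dot p w then 1 else -1.
have s0 : s != 0 by rewrite /s; case: ifP => _; rewrite ?oppr_eq0 oner_eq0.
pose w' := fun e => s * w e.
have Hw' : forall i, gtight y i -> dot (g i) w' = 0 by move=> i Ti; rewrite dotZ Hw // mulr0.
have pw' : 0 <= dot p w'.
  rewrite dotZ /s; case: ifP => H; first by rewrite mul1r.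
  by rewrite mulN1r oppr_ge0 ltW // ltNge H.
have [i0 Pi0] := bounded (ex_intro _ e (mulf_neq0 s0 He) : exists e, w' e != 0).
pose P := fun i => 0 < dot (g i) w'.
pose f := fun i => (c i - dot (g i) y) / dot (g i) w'.
have [i1 Pi1 Hmin] := @ex_argmin R I P f i0 Pi0.
pose t := f i1.
have Nt1 : ~~ gtight y i1.
  apply/negP => T1; move: Pi1; rewrite /P Hw' // ltxx //.
have t0 : 0 <= t.
  by rewrite /t /f divr_ge0 // ?subr_ge0 ?Fy // ltW.
pose y' := fun e => y e + t * w' e.
exists y'; split.
- move=> i; rewrite /y' dot_lin.
  case Pi: (P i).
    have H : t * dot (g i) w' <= c i - dot (g i) y.
      by rewrite -ler_pdivlMr //; apply: Hmin.
    lra.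
  have : dot (g i) w' <= 0 by rewrite leNgt; move/negbT: Pi.
  move=> Hn; have := Fy i; have : t * dot (g i) w' <= 0 by rewrite mulr_ge0_le0.
  lra.
- apply: proper_card; rewrite properE; apply/andP; split.
    apply/subsetP => i; rewrite !inE; apply: contra => /eqP Ti.
    by rewrite /gtight /y' dot_lin Hw' ?Ti ?mulr0 ?addr0 //; apply/eqP.
  apply/subsetPn; exists i1; rewrite !inE ?Nt1 //.
  rewrite negbK /gtight /y' dot_lin /t /f; apply/eqP; field.
  by rewrite gt_eqF.
- by rewrite /y' dot_lin lerDl mulr_ge0.
Qed.

Lemma push y : gfeas y -> exists x, gbasic x /\ dot p y <= dot p x.
Proof.
suff: forall n y, (#|ntight y| < n)%N -> gfeas y -> exists x, gbasic x /\ dot p y <= dot p x.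
  by move/(_ _ y (ltnSn _)).
elim=> [|n IH] {}y Hc Fy; first by [].
case: (classic (gbasic y)) => By; first by exists y.
have [y' [Fy' Hc' Hp']] := push_step Fy By.
have [x [Bx Hx]] := IH y' (leq_trans Hc' Hc) Fy'.
by exists x; split=> //; apply: le_trans Hx.
Qed.

Lemma basic_unique x x' : gbasic x -> gfeas x' -> (forall i, gtight x i = gtight x' i) -> x = x'.
Proof.
case=> Fx Bx Fx' Ht; apply: functional_extensionality => e.
have H0 : forall i, gtight x i -> dot (g i) (fun e => x e - x' e) = 0.
  move=> i Ti; rewrite dotB (eqP Ti); have := Ti; rewrite Ht => /eqP ->; by rewrite subrr.
by have /eqP := Bx _ H0 e; rewrite subr_eq0 => /eqP.
Qed.

Definition better x := [set S : {set I} | pb (exists x', [/\ gbasic x', S = [set i | gtight x' i] & dot p x < dot p x'])].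

Lemma opt_exists y0 : gfeas y0 -> exists x, gbasic x /\ forall y, gfeas y -> dot p y <= dot p x.
Proof.
move=> F0; have [x0 [B0 _]] := push F0.
suff: forall n x, (#|better x| < n)%N -> gbasic x -> exists x, gbasic x /\ forall y, gfeas y -> dot p y <= dot p x.
  by move/(_ _ x0 (ltnSn _) B0).
elim=> [|n IH] x Hc Bx; first by [].
case: (classic (forall y, gfeas y -> dot p y <= dot p x)) => Hx; first by exists x.
have [y [Fy Hy]] : exists y, gfeas y /\ dot p x < dot p y.
  apply: NNPP => H; apply: Hx => y Fy; rewrite leNgt; apply/negP => Hlt; apply: H; by exists y.
have [x' [Bx' Hx']] := push Fy.
apply: (IH x') => //.
have Hlt : dot p x < dot p x' by apply: lt_le_trans Hx'.
suff Hl : (#|better x'| < #|better x|)%N by apply: leq_trans Hl _.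
apply: proper_card; rewrite properE; apply/andP; split.
  apply/subsetP => S; rewrite !inE => /pbP [x'' [B'' -> H'']]; apply/pbP.
  by exists x''; split=> //; apply: lt_trans H''.
apply/subsetPn; exists [set i | gtight x' i]; rewrite !inE.
  by apply/pbP; exists x'.
apply/negP => /pbP [x'' [B'' Hs H'']].
have Ex : x'' = x'.
  apply: basic_unique => //; first by case: Bx'.
  move=> i; have := congr1 (fun S : {set I} => i \in S) Hs; rewrite /= !inE => ->.
  by [].
by move: H''; rewrite Ex ltxx.
Qed.

End GLP.

Lemma ker_nz (R : fieldType) (E J : finType) (P : {set J}) (q : J -> E -> R) :
  (#|P| < #|E|)%N ->
  exists w : E -> R, (exists e, w e != 0) /\ forall j, j \in P -> \sum_e q j e * w e = 0.
Proof.
move=> Hlt.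
pose A : 'M[R]_(#|E|, #|P|) := \matrix_(i, j) q (enum_val j) (enum_val i).
have Hr : (0 < \rank (kermx A))%N.
  by rewrite mxrank_ker subn_gt0; apply: leq_ltn_trans (rank_leq_col A) Hlt.
have Hnz : kermx A != 0 by rewrite -mxrank_eq0 -lt0n.
have : [exists i, [exists j, kermx A i j != 0]].
  apply: contraR Hnz => /existsPn H; apply/eqP/matrixP => i j.
  by have /existsPn/(_ j) := H i; rewrite negbK => /eqP ->; rewrite mxE.
move=> /existsP [i /existsP [j0 Hij]].
exists (fun e => kermx A i (enum_rank e)); split.
  by exists (enum_val j0); rewrite enum_valK.
move=> j Pj.
have HK := mulmx_ker A.
move: (congr1 (fun M : 'M[R]_(#|E|, #|P|) => M i (enum_rank_in Pj j)) HK) => /=; rewrite mxE [in RHS]mxE => H1; rewrite -[RHS]H1.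
rewrite (reindex (@enum_val _ (pred_of_simpl predT))) /=; last first.
  by exists enum_rank => x _; rewrite ?enum_valK ?enum_rankK.
apply: eq_bigr => i' _; rewrite [A _ _]mxE enum_rankK_in // enum_valK mulrC.
done.
Qed.

Section Conc.
Variables (R : realFieldType) (V E : finType) (inc : V -> E -> bool) (d : V -> E -> R).

Definition CI := ((E + E) + (V + {set E}))%type.

Definition cg (s : state R V E) (i : CI) : E -> R := fun e =>
  match i with
  | inl (inl e') => if e == e' then -1 else 0
  | inl (inr e') => if (e' \notin sF s) && (e == e') then 1 else 0
  | inr (inl v) => if (v \in sW s) && (e \in deltaF inc (sF s) v) then d v e else 0
  | inr (inr A) => if (A \subset sF s) && (e \in A) then 1 else 0
  end.

Definition cc (s : state R V E) (i : CI) : R :=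
  match i with
  | inl _ => 0
  | inr (inl v) => if v \in sW s then sb s v else 0
  | inr (inr A) => if A \subset sF s then (rk (sI s) A)%:R else 0
  end.

Lemma dot_pt (a : R) (e' : E) (x : E -> R) :
  dot (fun e => if e == e' then a else 0) x = a * x e'.
Proof.
rewrite /dot (bigD1 e') //= eqxx big1 ?addr0 // => e /negbTE ->; by rewrite mul0r.
Qed.

Lemma dot_set (A : {set E}) (f x : E -> R) :
  dot (fun e => if e \in A then f e else 0) x = \sum_(e in A) f e * x e.
Proof.
by rewrite /dot [RHS]big_mkcond; apply: eq_bigr => e _; case: ifP => //; rewrite mul0r.
Qed.

Lemma dot0 (x : E -> R) : dot (fun _ => 0) x = 0.
Proof. by rewrite /dot big1 // => e _; rewrite mul0r. Qed.

Lemma dot_cg1 s e' x : dot (cg s (inl (inl e'))) x = - x e'.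
Proof. by rewrite /cg dot_pt mulN1r. Qed.

Lemma dot_cg2 s e' x : dot (cg s (inl (inr e'))) x = if e' \notin sF s then x e' else 0.
Proof.
rewrite /cg; case: ifP => H; first by rewrite (dot_pt 1) mul1r.
by rewrite -[RHS](dot0 x); congr dot; apply: functional_extensionality => e; rewrite andFb.
Qed.

Lemma dot_cg3 s v x : dot (cg s (inr (inl v))) x =
  if v \in sW s then \sum_(e in deltaF inc (sF s) v) d v e * x e else 0.
Proof.
rewrite /cg; case: ifP => H; first by rewrite -dot_set.
by rewrite -[RHS](dot0 x); congr dot; apply: functional_extensionality => e; rewrite andFb.
Qed.

Lemma dot_cg4 s A x : dot (cg s (inr (inr A))) x =
  if A \subset sF s then \sum_(e in A) x e else 0.
Proof.
rewrite /cg; case: ifP => H.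
  by rewrite (dot_set A (fun _ => 1)); apply: eq_bigr => e _; rewrite mul1r.
by rewrite -[RHS](dot0 x); congr dot; apply: functional_extensionality => e; rewrite andFb.
Qed.

Lemma feas_equiv s (x : {ffun E -> R}) :
  lp_feasible inc d s x <-> gfeas (cg s) (cc s) (fun e => x e).
Proof.
split.
- case=> H1 H2 H3 H4 [[e|e]|[v|A]] /=.
  + by rewrite dot_cg1 oppr_le0.
  + by rewrite dot_cg2; case: ifP => // /H1 ->.
  + by rewrite dot_cg3; case: ifP => // /H3.
  + by rewrite dot_cg4; case: ifP => // /H4.
- move=> H; split.
  + move=> e He; have := H (inl (inr e)); rewrite /= dot_cg2 He.
    have := H (inl (inl e)); rewrite /= dot_cg1 oppr_le0; lra.
  + by move=> e; have := H (inl (inl e)); rewrite /= dot_cg1 oppr_le0.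
  + by move=> v Hv; have := H (inr (inl v)); rewrite /= dot_cg3 Hv.
  + by move=> A HA; have := H (inr (inr A)); rewrite /= dot_cg4 HA.
Qed.

Lemma feas_equiv' s (x : E -> R) :
  gfeas (cg s) (cc s) x <-> lp_feasible inc d s [ffun e => x e].
Proof.
rewrite feas_equiv; have -> : (fun e => [ffun e => x e] e) = x.
  by apply: functional_extensionality => e; rewrite ffunE.
by [].
Qed.


Lemma cbounded (s : state R V E) (w : E -> R) :
  (forall A, (rk (sI s) A <= #|A|)%N) ->
  (exists e, w e != 0) -> exists i, 0 < dot (cg s i) w.
Proof.
move=> Hrk [e He]; case: (ltrgt0P (w e)) => Hw.
- case Fe: (e \in sF s).
  + exists (inr (inr [set e])); rewrite dot_cg4 sub1set Fe big_set1 //.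
  + exists (inl (inr e)); by rewrite dot_cg2 Fe.
- by exists (inl (inl e)); rewrite dot_cg1 oppr_gt0.
- by rewrite Hw eqxx in He.
Qed.

Lemma extreme_equiv s (x : {ffun E -> R}) :
  lp_extreme inc d s x -> gbasic (cg s) (cc s) (fun e => x e).
Proof.
case=> Fx Ex; apply: extreme_basic; split; first by rewrite -feas_equiv.
move=> y z Fy Fz Hm e.
have := Ex [ffun e => y e] [ffun e => z e]; rewrite -!feas_equiv' => /(_ Fy Fz).
have Hm' : forall e, x e = ([ffun e => y e] e + [ffun e => z e] e) / 2.
  by move=> e'; rewrite !ffunE.
by move/(_ Hm') => /ffunP /(_ e); rewrite !ffunE.
Qed.

Lemma basic_equiv s (x : E -> R) :
  gbasic (cg s) (cc s) x -> lp_extreme inc d s [ffun e => x e].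
Proof.
move=> /basic_extreme [Fx Ex]; split; first by rewrite -feas_equiv'.
move=> y z Fy Fz Hm; apply/ffunP => e.
rewrite feas_equiv in Fy; rewrite feas_equiv in Fz.
have Hm' : forall e', x e' = ((fun e => y e) e' + (fun e => z e) e') / 2.
  by move=> e'; rewrite -Hm ffunE.
exact: (Ex _ _ Fy Fz Hm' e).
Qed.

Lemma exists_opt_extreme s p :
  (forall A, (rk (sI s) A <= #|A|)%N) ->
  (forall v, v \in sW s -> 0 <= sb s v) ->
  exists x, lp_opt_extreme inc d p s x.
Proof.
move=> Hrk Hb.
have F0 : gfeas (cg s) (cc s) (fun _ => 0).
  apply/feas_equiv'; split=> [e _|e|v Hv|A HA]; rewrite ?ffunE //.
  - rewrite big1 ?Hb // => e _; by rewrite ffunE mulr0.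
  - by rewrite big1 ?ler0n // => e _; rewrite ffunE.
have [x [Bx Ox]] := opt_exists (fun w => cbounded (s:=s) (w:=w) Hrk) p F0.
exists [ffun e => x e]; split; first exact: basic_equiv.
move=> y Fy; rewrite /lp_obj.
have -> : \sum_e p e * [ffun e => x e] e = dot p x.
  by rewrite /dot; apply: eq_bigr => e _; rewrite ffunE.
have := Ox _ (proj1 (feas_equiv s y) Fy); by [].
Qed.

End Conc.

Lemma card_sumset (T1 T2 : finType) (A : {set T1}) (B : {set T2}) :
  #|[set j : T1 + T2 | match j with inl a => a \in A | inr b => b \in B end]| = (#|A| + #|B|)%N.
Proof.
have -> : [set j : T1 + T2 | match j with inl a => a \in A | inr b => b \in B end] =
          (@inl T1 T2) @: A :|: (@inr T1 T2) @: B.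
  apply/setP => [[a|b]]; rewrite !inE.
  - apply/idP/orP => [H|[/imsetP[a' Ha' [->]]//|/imsetP[b' _ //]]].
    by left; apply/imsetP; exists a.
  - apply/idP/orP => [H|[/imsetP[a' _ //]|/imsetP[b' Hb' [->]]//]].
    by right; apply/imsetP; exists b.
rewrite cardsU.
have -> : (@inl T1 T2) @: A :&: (@inr T1 T2) @: B = set0.
  apply/setP => j; rewrite !inE; apply/negP => /andP[/imsetP[a _ ->] /imsetP[b _ //]].
rewrite cards0 subn0 !card_imset //; [move=> u v [] // | move=> u v [] //].
Qed.

Lemma sum_UI (E : finType) (R : realFieldType) (f : E -> R) (A B : {set E}) :
  \sum_(e in A :|: B) f e + \sum_(e in A :&: B) f e = \sum_(e in A) f e + \sum_(e in B) f e.
Proof.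
rewrite (big_setID (A := A :|: B) B) (big_setID (A := A) B) /=.
have -> : (A :|: B) :&: B = B by apply/setIidPr; apply: subsetUr.
have -> : (A :|: B) :\: B = A :\: B by rewrite setDUl setDv setU0.
set a := \sum_(i in B) f i; set b := \sum_(i in A :\: B) f i; set c := \sum_(i in A :&: B) f i.
rewrite -/c; ring.
Qed.

Lemma sum_sub (E : finType) (R : realFieldType) (f : E -> R) (A B : {set E}) :
  A \subset B -> (forall e, e \in B -> 0 <= f e) -> \sum_(e in A) f e <= \sum_(e in B) f e.
Proof.
move=> AB Hf; rewrite (big_setID (A := B) A) /=.
have -> : B :&: A = A by apply/setIidPr.
rewrite lerDl; apply: sumr_ge0 => e; rewrite inE => /andP[_]; exact: Hf.
Qed.

Section Key.
Variables (R : realFieldType) (V E : finType) (inc : V -> E -> bool) (d : V -> E -> R) (k : nat).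
Variables (s : state R V E) (x : {ffun E -> R}).
Hypothesis Hk : forall e, (#|[set v | inc v e]| <= k)%N.
Hypothesis Hmat : is_matroid (sI s).
Hypothesis HF : sF s != set0.
Hypothesis Hext : lp_extreme inc d s x.
Hypothesis Hfrac : forall e, e \in sF s -> x e != 0 /\ x e != 1.

Local Notation F := (sF s).
Local Notation W := (sW s).
Local Notation rkF := (rk (sI s)).

Definition sx (A : {set E}) := \sum_(e in A) x e.

Lemma feasx : lp_feasible inc d s x.
Proof. by case: Hext. Qed.

Lemma xout e : e \notin F -> x e = 0.
Proof. by case: feasx => H _ _ _; apply: H. Qed.

Lemma xge0 e : 0 <= x e.
Proof. by case: feasx => _ H _ _; apply: H. Qed.

Lemma xrk (A : {set E}) : A \subset F -> sx A <= (rkF A)%:R.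
Proof. by case: feasx => _ _ _ H; apply: H. Qed.

Lemma xpos e : e \in F -> 0 < x e.
Proof. by move=> Fe; rewrite lt_def xge0 andbT; case: (Hfrac Fe). Qed.

Lemma xlt1 e : e \in F -> x e < 1.
Proof.
move=> Fe; have : sx [set e] <= (rkF [set e])%:R by apply: xrk; rewrite sub1set.
rewrite /sx big_set1 => H.
have H1 : ((rkF [set e])%:R : R) <= 1.
  by have := rk_le Hmat [set e]; rewrite cards1 => h; rewrite lern1.
rewrite lt_def; case: (Hfrac Fe) => _ H2; rewrite eq_sym H2 /=; exact: le_trans H H1.
Qed.

Definition tightb (A : {set E}) := (A \subset F) && (sx A == (rkF A)%:R).

Lemma tightUI (A B : {set E}) : tightb A -> tightb B -> tightb (A :|: B) /\ tightb (A :&: B).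
Proof.
move=> /andP[AF /eqP HA] /andP[BF /eqP HB].
have UF : A :|: B \subset F by rewrite subUset AF BF.
have IF : A :&: B \subset F by apply: subset_trans (subsetIl _ _) AF.
have h1 := xrk UF; have h2 := xrk IF.
have hm := sum_UI x A B; rewrite -/(sx _) -/(sx _) -/(sx _) -/(sx _) in hm.
have hs : ((rkF (A :|: B))%:R + (rkF (A :&: B))%:R : R) <= (rkF A)%:R + (rkF B)%:R.
  by rewrite -!natrD ler_nat; apply: (rk_submod Hmat).
rewrite /tightb UF IF /=; split; apply/eqP; lra.
Qed.

Definition isch (C : {set {set E}}) :=
  [forall A in C, tightb A] && [forall A in C, forall B in C, (A \subset B) || (B \subset A)].

Lemma isch0 : isch set0.
Proof. by apply/andP; split; apply/forall_inP => A; rewrite inE. Qed.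

Definition Ch := [arg max_(D > set0 | isch D) #|D|].

Lemma Ch_spec : isch Ch /\ forall D, isch D -> (#|D| <= #|Ch|)%N.
Proof. rewrite /Ch; case: arg_maxnP; first exact: isch0. by move=> D HD Hm; split. Qed.

Lemma Ch_tight (A : {set E}) : A \in Ch -> tightb A.
Proof. by case: Ch_spec => /andP[/forall_inP H _] _; apply: H. Qed.

Lemma Ch_cmp (A B : {set E}) : A \in Ch -> B \in Ch -> (A \subset B) || (B \subset A).
Proof. by case: Ch_spec => /andP[_ /forall_inP H] _ HA HB; move/forall_inP: (H A HA); apply. Qed.

Lemma Ch_ins (S : {set E}) : tightb S -> (forall D : {set E}, D \in Ch -> (S \subset D) || (D \subset S)) -> S \in Ch.
Proof.
move=> TS Hc; apply/negPn/negP => NS.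
case: Ch_spec => _ /(_ (S |: Ch)).
have -> : isch (S |: Ch).
  apply/andP; split.
    by apply/forall_inP => A; rewrite in_setU1 => /orP[/eqP->//|]; apply: Ch_tight.
  apply/forall_inP => A; rewrite in_setU1 => HA; apply/forall_inP => B; rewrite in_setU1 => HB.
  case/orP: HA => [/eqP->|HA]; case/orP: HB => [/eqP->|HB].
  - by rewrite subxx.
  - exact: Hc.
  - by rewrite orbC Hc.
  - exact: Ch_cmp.
by rewrite cardsU1 NS ltnn => /(_ isT).
Qed.

Lemma tight0 : tightb set0.
Proof.
rewrite /tightb sub0set /sx big_set0.
have : (rkF set0 <= #|(set0 : {set E})|)%N by apply: (rk_le Hmat).
by rewrite cards0 leqn0 => /eqP ->; rewrite mulr0n eqxx.
Qed.

Lemma Ch0 : set0 \in Ch.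
Proof. by apply: Ch_ins; [exact: tight0 | move=> D _; rewrite sub0set]. Qed.

Definition Mtop := [arg max_(C > set0 in Ch) #|C|].

Lemma Mtop_spec : Mtop \in Ch /\ forall C, C \in Ch -> (#|C| <= #|Mtop|)%N.
Proof. rewrite /Mtop; case: arg_maxnP; first exact: Ch0. by move=> C HC Hm; split. Qed.

Lemma Mtop_max (C : {set E}) : C \in Ch -> C \subset Mtop.
Proof.
move=> HC; case: Mtop_spec => HM Hm.
case/orP: (Ch_cmp HC HM) => // MC.
have : Mtop == C by rewrite eqEcard MC Hm.
by move/eqP => ->.
Qed.

Lemma tight_top (S : {set E}) : tightb S -> S \subset Mtop.
Proof.
move=> TS; case: Mtop_spec => HM _.
have T1 : tightb (S :|: Mtop) by case: (tightUI TS (Ch_tight HM)).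
have : S :|: Mtop \in Ch.
  apply: Ch_ins => // D HD; apply/orP; right.
  by apply: subset_trans (Mtop_max HD) (subsetUr _ _).
by move/Mtop_max; rewrite subUset => /andP[].
Qed.

Lemma span (w : E -> R) : (forall C : {set E}, C \in Ch -> \sum_(e in C) w e = 0) ->
  forall S : {set E}, tightb S -> \sum_(e in S) w e = 0.
Proof.
move=> Hw.
suff H : forall n (C : {set E}), C \in Ch -> (#|C| <= n)%N -> forall S : {set E}, tightb S -> \sum_(e in S :&: C) w e = 0.
  move=> S TS; have := H _ _ (proj1 Mtop_spec) (leqnn _) S TS.
  by have -> : S :&: Mtop = S by apply/setIidPl; apply: tight_top.
elim=> [|n IH] C HC Hn S TS.
  by move: Hn; rewrite leqn0 cards_eq0 => /eqP ->; rewrite setI0 big_set0.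
case: (eqVneq C set0) => [->|C0]; first by rewrite setI0 big_set0.
pose Ps := [set C' in Ch | C' \proper C].
have P0 : set0 \in Ps by rewrite inE Ch0 /= proper0.
case: (@arg_maxnP _ set0 (fun C' => C' \in Ps) (fun C' => #|C'|) P0) => C'.
rewrite inE => /andP[HC' PC'] Hmx.
have C'C : C' \subset C by move: PC'; rewrite properE => /andP[].
pose Q := (S :&: C) :|: C'.
have TQ : tightb Q.
  case: (tightUI TS (Ch_tight HC)) => _ T1.
  by case: (tightUI T1 (Ch_tight HC')).
have HQ : Q \in Ch.
  apply: Ch_ins => // D HD.
  case DC': (D \subset C'); first by rewrite orbC /Q (subset_trans DC' (subsetUr _ _)).
  case CD: (C \subset D).
    by rewrite /Q subUset (subset_trans (subsetIr _ _) CD) (subset_trans C'C CD).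
  exfalso.
  have C'D : C' \subset D by move: (Ch_cmp HC' HD); rewrite DC' orbF.
  have DC : D \subset C by move: (Ch_cmp HC HD); rewrite CD.
  have PD : D \proper C by rewrite properEneq DC andbT; apply/eqP => E0; move: CD; rewrite E0 subxx.
  have : (#|D| <= #|C'|)%N by apply: Hmx; rewrite inE HD PD.
  move=> Hc; have : C' == D by rewrite eqEcard C'D Hc.
  by move/eqP => E0; move: DC'; rewrite E0 subxx.
have h := sum_UI w (S :&: C) C'.
rewrite -/Q (Hw Q HQ) (Hw C' HC') add0r addr0 in h.
have E1 : (S :&: C) :&: C' = S :&: C' by rewrite -setIA (setIidPr C'C).
have Hn' : (#|C'| <= n)%N.
  have : (#|C'| < #|C|)%N by apply: proper_card.
  move=> H1; rewrite -ltnS; exact: leq_trans H1 Hn.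
by rewrite E1 (IH C' HC' Hn' S TS) in h.
Qed.

Lemma Ch_inj (C D : {set E}) : C \in Ch -> D \in Ch -> rkF C = rkF D -> C = D.
Proof.
suff H : forall C D, C \in Ch -> D \in Ch -> rkF C = rkF D -> C \subset D -> C = D.
  move=> HC HD Hr; case/orP: (Ch_cmp HC HD) => S; first exact: H.
  by apply/esym/H.
move=> {}C {}D HC HD Hr CD; apply/eqP; rewrite eqEsubset CD /=.
have /andP[DF /eqP TD] := Ch_tight HD; have /andP[CF /eqP TC] := Ch_tight HC.
have hs : sx D = sx C + \sum_(e in D :\: C) x e.
  by rewrite /sx (big_setID (A := D) C) /= (setIidPr CD).
apply/subsetP => e eD; apply/negPn/negP => eC.
have : 0 < \sum_(e in D :\: C) x e.
  rewrite (bigD1 e) /=; last by rewrite inE eC eD.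
  apply: lt_le_trans (xpos (subsetP DF e eD)) _; rewrite lerDl; apply: sumr_ge0 => *; exact: xge0.
rewrite TD TC Hr in hs; lra.
Qed.

Lemma count : (#|Ch :\ set0|)%:R <= sx F.
Proof.
case: Mtop_spec => HM _.
pose m := rkF Mtop.
pose f := fun C : {set E} => (inord (rkF C) : 'I_m.+1).
have Hrm : forall C, C \in Ch -> (rkF C <= m)%N.
  by move=> C HC; apply: (rk_mono Hmat); apply: Mtop_max.
have Hinj : {in Ch :\ set0 &, injective f}.
  move=> C D; rewrite !inE => /andP[_ HC] /andP[_ HD] /(congr1 (@nat_of_ord _)).
  rewrite /f !inordK ?ltnS ?Hrm //; exact: Ch_inj.
have Hsub : f @: (Ch :\ set0) \subset [set~ ord0].
  apply/subsetP => j /imsetP[C]; rewrite !inE => /andP[C0 HC] ->.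
  apply/eqP => /(congr1 (@nat_of_ord _)); rewrite /f inordK ?ltnS ?Hrm //= => H0.
  have /andP[CF /eqP TC] := Ch_tight HC.
  have [e eC] : exists e, e \in C by apply/set0Pn.
  have : 0 < sx C.
    rewrite /sx (bigD1 e) //=; apply: lt_le_trans (xpos (subsetP CF e eC)) _.
    rewrite lerDl; apply: sumr_ge0 => *; exact: xge0.
  by rewrite TC H0 ltxx.
have := subset_leq_card Hsub; rewrite card_in_imset // cardsC1 card_ord /= => Hc.
apply: le_trans (_ : (m%:R : R) <= _); first by rewrite ler_nat.
have /andP[MF /eqP TM] := Ch_tight HM.
rewrite -TM /sx; apply: sum_sub => // e _; exact: xge0.
Qed.

Definition Tset := [set v in W | \sum_(e in deltaF inc F v) d v e * x e == sb s v].

Lemma slack_eq v : slack inc F x v = \sum_(e in deltaF inc F v) (1 - x e).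
Proof. by rewrite /slack sumrB sumr_const. Qed.

Lemma Tcount : (forall v, v \in W -> k%:R < slack inc F x v) ->
  (#|Tset|)%:R < (#|F|)%:R - sx F.
Proof.
move=> Hsl.
pose h := fun e => 1 - x e.
have hpos : forall e, e \in F -> 0 < h e by move=> e Fe; rewrite /h subr_gt0 xlt1.
have Hsum : \sum_(v in Tset) slack inc F x v <= k%:R * \sum_(e in F) h e.
  have -> : \sum_(v in Tset) slack inc F x v =
            \sum_v \sum_e (if (v \in Tset) && ((e \in F) && inc v e) then h e else 0).
    rewrite big_mkcond; apply: eq_bigr => v _; rewrite slack_eq.
    case: (v \in Tset) => /=; last by rewrite big1.
    by rewrite big_mkcond; apply: eq_bigr => e _; rewrite /deltaF inE.
  rewrite exchange_big /= mulr_sumr [X in _ <= X]big_mkcond; apply: ler_sum => e _.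
  case Fe: (e \in F); last by rewrite big1 // => v _; rewrite andbF.
  rewrite -big_mkcond /=.
  have -> : \sum_(v | (v \in Tset) && inc v e) h e = (#|[set v in Tset | inc v e]|)%:R * h e.
    have -> : \sum_(v | (v \in Tset) && inc v e) h e = \sum_(v in [set v in Tset | inc v e]) h e.
      by apply: eq_bigl => v; rewrite inE.
    by rewrite sumr_const mulr_natl.
  rewrite ler_pM2r ?hpos // ler_nat; apply: leq_trans (Hk e).
  by apply: subset_leq_card; apply/subsetP => v; rewrite !inE => /andP[].
have sumF : \sum_(e in F) h e = (#|F|)%:R - sx F by rewrite /h sumrB sumr_const.
have Hhpos : 0 < \sum_(e in F) h e.
  have [e0 Fe0] : exists e, e \in F by apply/set0Pn.
  rewrite (bigD1 e0) //=; apply: lt_le_trans (hpos e0 Fe0) _.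
  by rewrite lerDl; apply: sumr_ge0 => e /andP[Fe _]; apply: ltW; apply: hpos.
case: (set_0Vmem Tset) => [T0 | [v0 Tv0]].
  by rewrite T0 cards0 -sumF.
have Hlow : k%:R * (#|Tset|)%:R < \sum_(v in Tset) slack inc F x v.
  rewrite mulr_natr -sumr_const (bigD1 v0) //= [X in _ < X](bigD1 v0) //=.
  apply: ltr_leD.
    by apply: Hsl; move: Tv0; rewrite inE => /andP[].
  by apply: ler_sum => v /andP[Tv _]; apply: ltW; apply: Hsl; move: Tv; rewrite inE => /andP[].
have Hlt := lt_le_trans Hlow Hsum.
case: (posnP k) => [k0|kpos].
  by move: Hlt; rewrite k0 !mul0r ltxx.
by rewrite -sumF -(ltr_pM2l (_ : 0 < k%:R)) ?ltr0n.
Qed.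

Lemma key_lemma : exists2 v, v \in W & slack inc F x v <= k%:R.
Proof.
case: (boolP [exists v in W, slack inc F x v <= k%:R]) => [/exists_inP [v Hv Hs]|Hn].
  by exists v.
exfalso.
have Hsl : forall v, v \in W -> k%:R < slack inc F x v.
  move=> v Hv; rewrite ltNge; apply/negP => H; move/negP: Hn; apply.
  by apply/exists_inP; exists v.
have HT := Tcount Hsl.
have HCo := count.
pose PA := [set a : E + V | match a with inl e => e \in ~: F | inr v => v \in Tset end].
pose P := [set j : (E + V) + {set E} | match j with inl a => a \in PA | inr C => C \in Ch :\ set0 end].
pose q := fun j : (E + V) + {set E} => match j with
  | inl (inl e') => fun e => if e == e' then (1 : R) else 0
  | inl (inr v) => fun e => if e \in deltaF inc F v then d v e else 0
  | inr C => fun e => if e \in C then (1 : R) else 0 end.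
have Hcard : (#|P| < #|E|)%N.
  rewrite /P card_sumset /PA card_sumset.
  have : ((#|Tset| + #|Ch :\ set0|)%:R : R) < (#|F|)%:R by rewrite natrD; have := HCo; lra.
  rewrite ltr_nat => H.
  by rewrite -(cardsC F) [(#|F| + _)%N]addnC -addnA ltn_add2l.
have [w [[e0 He0] Hw]] := ker_nz q Hcard.
case: (extreme_equiv Hext) => _ Bx.
suff: forall i, gtight (cg inc d s) (cc s) (fun e => x e) i -> dot (cg inc d s i) w = 0.
  by move/(Bx w)/(_ e0)/eqP; rewrite (negbTE He0).
have wout : forall e, e \notin F -> w e = 0.
  move=> e He; have := Hw (inl (inl e)); rewrite !inE He => /(_ isT) /=.
  by rewrite -/(dot _ w) (dot_pt 1) mul1r.
have Hrow : forall v, v \in Tset -> \sum_(e in deltaF inc F v) d v e * w e = 0.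
  move=> v Hv; have := Hw (inl (inr v)); rewrite !inE /=; move: Hv; rewrite inE => -> /(_ isT).
  by rewrite -/(dot _ w) dot_set.
have HCh : forall C, C \in Ch -> \sum_(e in C) w e = 0.
  move=> C HC; case: (eqVneq C set0) => [->|C0]; first by rewrite big_set0.
  have := Hw (inr C); rewrite !inE /= C0 HC => /(_ isT).
  move=> H; rewrite -[RHS]H big_mkcond; apply: eq_bigr => e _; by case: (e \in C); rewrite ?mul1r ?mul0r.
move=> [[e|e]|[v|A]]; rewrite /gtight.
- rewrite !dot_cg1 /= => /eqP Hx; rewrite wout ?oppr0 //.
  apply/negP => Fe; have := xpos Fe; lra.
- rewrite !dot_cg2 => _; case: ifP => // /wout ->; done.
- rewrite !dot_cg3 /=; case: ifP => // Wv Ht; apply: Hrow; by rewrite inE Wv Ht.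
- rewrite !dot_cg4 /=; case: ifP => // AF Ht; apply: span => //; by rewrite /tightb AF Ht.
Qed.

End Key.

Lemma knap (R : realFieldType) (E : finType) (k : nat) (dd z : E -> R) (S S' L : {set E}) :
  S' \subset S -> (forall e, e \in S -> 0 <= dd e) -> (forall e, e \in S' -> 0 <= z e <= 1) ->
  \sum_(e in S') z e <= k%:R ->
  L \subset S -> #|L| = minn k #|S| -> (forall e f, e \in L -> f \in S :\: L -> dd f <= dd e) ->
  \sum_(e in S') z e * dd e <= \sum_(e in L) dd e.
Proof.
move=> S'S Hdd Hz Hzk LS HL Hord.
case: (leqP #|S| k) => Hk.
  have LeS : L = S.
    have HLS : #|L| = #|S| by rewrite HL; apply/minn_idPr.
    by apply/eqP; rewrite eqEcard LS /= HLS.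
  rewrite LeS; apply: le_trans (_ : \sum_(e in S') dd e <= _).
    apply: ler_sum => e He; case/andP: (Hz e He) => z0 z1.
    by rewrite -[X in _ <= X]mul1r ler_wpM2r // Hdd // (subsetP S'S).
  by apply: sum_sub => //.
have HLk : #|L| = k by rewrite HL; apply/minn_idPl; apply: ltnW.
have [th [th0 thu thl]] : exists th, [/\ 0 <= th, forall f, f \in S :\: L -> dd f <= th &
                                        forall e, e \in L -> th <= dd e].
  case: (set_0Vmem L) => [L0 | [e0 e0L]].
    have [f0 f0S] : exists f, f \in S by apply/set0Pn; rewrite -card_gt0; exact: leq_ltn_trans (leq0n _) Hk.
    have [f1 f1S Hmax] := @ex_argmin R E (fun f => f \in S) (fun f => - dd f) f0 f0S.
    exists (dd f1); split; first exact: Hdd.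
    - by move=> f; rewrite L0 setD0 => /Hmax; rewrite lerN2.
    - by move=> e; rewrite L0 inE.
  have [e1 e1L Hmin] := @ex_argmin R E (fun e => e \in L) dd e0 e0L.
  exists (dd e1); split; first by apply: Hdd; apply: (subsetP LS).
  - by move=> f Hf; apply: Hord.
  - by move=> e /Hmin.
pose A := S' :&: L; pose B := S' :\: L.
have h1 : \sum_(e in S') z e * dd e = \sum_(e in A) z e * dd e + \sum_(e in B) z e * dd e.
  by rewrite (big_setID (A := S') L).
have h4 : \sum_(e in S') z e = \sum_(e in A) z e + \sum_(e in B) z e.
  by rewrite (big_setID (A := S') L).
have h2 : \sum_(e in B) z e * dd e <= th * \sum_(e in B) z e.
  rewrite mulr_sumr; apply: ler_sum => e; rewrite inE => /andP[eL eS'].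
  have /andP[z0 _] := Hz e eS'.
  rewrite mulrC ler_wpM2r //; apply: thu; rewrite inE eL (subsetP S'S) //.
have h3 : \sum_(e in A) z e * dd e = \sum_(e in A) z e * (dd e - th) + th * \sum_(e in A) z e.
  rewrite mulr_sumr -big_split /=; apply: eq_bigr => e _; ring.
have h5 : \sum_(e in A) z e * (dd e - th) <= \sum_(e in A) (dd e - th).
  apply: ler_sum => e; rewrite inE => /andP[eS' eL].
  have /andP[_ z1] := Hz e eS'.
  by rewrite -[X in _ <= X]mul1r ler_wpM2r // subr_ge0 thl.
have h6 : \sum_(e in A) (dd e - th) <= \sum_(e in L) (dd e - th).
  apply: sum_sub; first exact: subsetIr.
  by move=> e eL; rewrite subr_ge0 thl.
have h7 : \sum_(e in L) (dd e - th) = \sum_(e in L) dd e - th * k%:R.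
  by rewrite sumrB sumr_const HLk mulr_natr.
have h8 : th * \sum_(e in S') z e <= th * k%:R by rewrite ler_wpM2l.
rewrite h4 mulrDr in h8.
lra.
Qed.

Section Main.
Variables (R : realFieldType) (V E : finType) (inc : V -> E -> bool) (k : nat)
  (b : V -> R) (d : V -> E -> R) (p : E -> R) (indep : {set E} -> bool).
Hypothesis Hk : forall e : E, (#|[set v | inc v e]| <= k)%N.
Hypothesis Hb : forall v, 0 <= b v.
Hypothesis Hd : forall v e, inc v e -> 0 <= d v e.
Hypothesis Hind : is_matroid indep.

Record Inv (s : state R V E) : Prop := {
  i_disj : sM s :&: sF s = set0;
  i_indep : indep (sM s);
  i_I : forall A, sI s A = (A \subset sF s) && indep (A :|: sM s);
  i_b : forall v, sb s v = b v - \sum_(e in deltaF inc (sM s) v) d v e;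
  i_pos : forall v, v \in sW s -> 0 <= sb s v;
  i_out : forall v, v \notin sW s -> exists G : {set E}, exists y : E -> R,
        [/\ (forall e, e \in G -> inc v e /\ 0 <= y e <= 1),
            \sum_(e in G) (1 - y e) <= k%:R,
            deltaF inc (sF s) v \subset G &
            \sum_(e in deltaF inc (sM s) v :\: G) d v e + \sum_(e in G) y e * d v e <= b v] }.

Lemma Inv_mat (s : state R V E) : Inv s -> is_matroid (sI s).
Proof.
move=> Is; have -> : sI s = Ix indep (sF s) (sM s).
  by apply: functional_extensionality => A; rewrite (i_I Is).
by apply: Ix_matroid => //; [exact: (i_disj Is) | exact: (i_indep Is)].
Qed.

Lemma Inv_init : Inv (init_state indep b).
Proof.
split => //=.
- by rewrite set0I.
- by case: Hind.
- by move=> A; rewrite subsetT setU0.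
- move=> v; rewrite ffunE; have -> : deltaF inc set0 v = set0 by apply/setP => e; rewrite !inE.
  by rewrite big_set0 subr0.
- by move=> v _; rewrite ffunE.
- by move=> v; rewrite inE.
Qed.

Lemma deltaF_sub (F F' : {set E}) (v : V) : F \subset F' -> deltaF inc F v \subset deltaF inc F' v.
Proof.
by move=> FF'; apply/subsetP => e; rewrite !inE => /andP[eF ->]; rewrite (subsetP FF') .
Qed.

Lemma x_le1 (s : state R V E) (x : {ffun E -> R}) (e : E) : Inv s -> lp_feasible inc d s x -> e \in sF s -> x e <= 1.
Proof.
move=> Is [_ _ _ H4] Fe; have := H4 [set e]; rewrite sub1set Fe big_set1 => /(_ isT) H.
apply: le_trans H _; have := rk_le (Inv_mat Is) [set e]; rewrite cards1 => h.
by rewrite lern1.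
Qed.

Lemma MF (s : state R V E) f : Inv s -> f \in sM s -> f \notin sF s.
Proof.
move=> Is fM; apply/negP => fF.
have : f \in sM s :&: sF s by rewrite inE fM fF.
by rewrite (i_disj Is) inE.
Qed.

Lemma Inv_step (s s' : state R V E) : Inv s -> step inc d p s s' -> Inv s'.
Proof.
move=> Is [HF [x [[Hext _] Hcase]]].
have Fx := proj1 Hext.
have Fx' := Fx; case: Fx' => X1 X2 X3 X4.
case: Hcase => [[e Fe [xe0 ->]] | [Hn0 [e Fe [xe1 ->]]] | [Hfr [v0 Wv0 [Hmin ->]]]].
-
  split => /=.
  + apply/setP => f; rewrite !inE; apply/negP => /and3P[fM _ fF].
    by move: (MF Is fM); rewrite fF.
  + exact: (i_indep Is).
  + by move=> A; rewrite /mdel (i_I Is) subsetD1 andbA [(_ \notin _) && _]andbC.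
  + exact: (i_b Is).
  + exact: (i_pos Is).
  + move=> v Hv; have [G [y [H1 H2 H3 H4]]] := i_out Is Hv.
    exists G, y; split=> //; apply: subset_trans H3; apply: deltaF_sub; exact: subsetDl.
-
  have eM : e \notin sM s by apply/negP => /(MF Is); rewrite Fe.
  have Ie : sI s [set e].
    apply/negPn/negP => Ne; have := X4 [set e]; rewrite sub1set Fe big_set1 xe1 => /(_ isT).
    by rewrite (rk_loop Ne) ler10.
  have dU : forall u, deltaF inc (e |: sM s) u =
                  if inc u e then e |: deltaF inc (sM s) u else deltaF inc (sM s) u.
    move=> u; apply/setP => f; case: ifP => Hu; rewrite !inE; last first.
      by case: (eqVneq f e) => [->|]; rewrite ?Hu ?andbF.
    by case: (eqVneq f e) => [->|] //=; rewrite Hu.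
  split => /=.
  + apply/setP => f; rewrite !inE; apply/negP => /andP[/orP[/eqP->|fM] /andP[fe fF]].
      by rewrite eqxx in fe.
    by move: (MF Is fM); rewrite fF.
  + by move: Ie; rewrite (i_I Is) => /andP[_].
  + move=> A; rewrite /mcon Ie (i_I Is) subsetD1 subUset sub1set Fe /=.
    have -> : e |: A :|: sM s = A :|: (e |: sM s) by rewrite setUCA setUA.
    by case: (e \in A); case: (A \subset sF s).
  + move=> u; rewrite /upd_b ffunE (i_b Is) dU; case: ifP => Hu //.
    rewrite big_setU1 /=; first by ring.
    by rewrite inE (negbTE eM).
  + move=> u Hu; rewrite /upd_b ffunE; case: ifP => Hue; last exact: (i_pos Is).
    have H3 := X3 u Hu.
    have : d u e <= \sum_(f in deltaF inc (sF s) u) d u f * x f.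
      rewrite (bigD1 e) /=; last by rewrite inE Fe Hue.
      rewrite xe1 mulr1 lerDl; apply: sumr_ge0 => f /andP[]; rewrite inE => /andP[_ Hf] _.
      by apply: mulr_ge0; [apply: Hd | apply: X2].
    by rewrite subr_ge0 => H; apply: le_trans H H3.
  + move=> v Hv; have [G [y [H1 H2 H3 H4]]] := i_out Is Hv.
    exists G, y; split=> //.
      apply: subset_trans H3; apply: deltaF_sub; exact: subsetDl.
    rewrite dU; case: ifP => Hve //.
    have eG : e \in G by apply: (subsetP H3); rewrite inE Fe Hve.
    have -> : (e |: deltaF inc (sM s) v) :\: G = deltaF inc (sM s) v :\: G.
      apply/setP => f; rewrite !inE; case: (eqVneq f e) => [->|] //=; by rewrite eG.
    exact: H4.
-
  split => /=.
  + exact: (i_disj Is).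
  + exact: (i_indep Is).
  + exact: (i_I Is).
  + exact: (i_b Is).
  + by move=> v; rewrite in_setD1 => /andP[_]; apply: (i_pos Is).
  + move=> v; rewrite in_setD1 negb_and negbK => /orP[/eqP -> | Hv]; last exact: (i_out Is).
    exists (deltaF inc (sF s) v0), (fun e => x e); split.
    * move=> e; rewrite inE => /andP[Fe Hie]; split=> //.
      by rewrite X2 (x_le1 Is Fx Fe).
    * have [u Wu Hu] := key_lemma Hk (Inv_mat Is) HF Hext Hfr.
      rewrite -slack_eq; apply: le_trans Hu; exact: Hmin.
    * exact: subxx.
    * have -> : deltaF inc (sM s) v0 :\: deltaF inc (sF s) v0 = deltaF inc (sM s) v0.
        apply/setP => f; rewrite !inE; case fM: (f \in sM s); rewrite ?andbF //=.
        by rewrite (negbTE (MF Is fM)).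
      have H3 := X3 v0 Wv0; rewrite (i_b Is) in H3.
      have -> : \sum_(e in deltaF inc (sF s) v0) x e * d v0 e =
                \sum_(e in deltaF inc (sF s) v0) d v0 e * x e by apply: eq_bigr => e _; rewrite mulrC.
      lra.
Qed.

Lemma Inv_reach (s : state R V E) : reachable inc d p (init_state indep b) s -> Inv s.
Proof.
elim=> [|s1 s2 _ IH Hst]; first exact: Inv_init.
exact: Inv_step IH Hst.
Qed.

Lemma progress (s : state R V E) : reachable inc d p (init_state indep b) s -> sF s != set0 ->
  exists s', step inc d p s s'.
Proof.
move=> Hr HF; have Is := Inv_reach Hr.
have [x Hx] := exists_opt_extreme inc d p (rk_le (Inv_mat Is)) (i_pos Is).
case: (boolP [exists e in sF s, x e == 0]) => [/exists_inP [e Fe /eqP xe0] | N0].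
  exists (State (sW s) (sF s :\ e) (mdel (sI s) e) (sb s) (sM s)); split=> //.
  by exists x; split=> //; apply: Or31; exists e.
have H0 : forall e, e \in sF s -> x e != 0.
  by move=> e Fe; apply/negP => He; move/negP: N0; apply; apply/exists_inP; exists e.
case: (boolP [exists e in sF s, x e == 1]) => [/exists_inP [e Fe /eqP xe1] | N1].
  exists (State (sW s) (sF s :\ e) (mcon (sI s) e) (upd_b inc d (sb s) e) (e |: sM s)); split=> //.
  by exists x; split=> //; apply: Or32; split=> //; exists e.
have Hfr : forall e, e \in sF s -> x e != 0 /\ x e != 1.
  move=> e Fe; split; first exact: H0.
  by apply/negP => He; move/negP: N1; apply; apply/exists_inP; exists e.
have [u Wu _] := key_lemma Hk (Inv_mat Is) HF (proj1 Hx) Hfr.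
have [v0 Wv0 Hmin] := @ex_argmin R V (fun v => v \in sW s) (slack inc (sF s) x) u Wu.
exists (State (sW s :\ v0) (sF s) (sI s) (sb s) (sM s)); split=> //.
by exists x; split=> //; apply: Or33; split=> //; exists v0.
Qed.

Lemma final (s : state R V E) : reachable inc d p (init_state indep b) s ->
  indep (sM s) /\
  forall (v : V) (L : {set E}), top_demand inc d k (sM s) v L ->
    \sum_(e in deltaF inc (sM s) v :\: L) d v e <= b v.
Proof.
move=> Hr; have Is := Inv_reach Hr; split; first exact: (i_indep Is).
move=> v L [LS HL Hord].
set S := deltaF inc (sM s) v.
have dS : forall e, e \in S -> 0 <= d v e by move=> e; rewrite inE => /andP[_]; apply: Hd.
have hSL : \sum_(e in S :\: L) d v e = \sum_(e in S) d v e - \sum_(e in L) d v e.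
  by rewrite [\sum_(e in S) _](big_setID (A := S) L) /= (setIidPr LS) addrC addrK.
rewrite hSL.
case: (boolP (v \in sW s)) => Wv.
  have := i_pos Is Wv; rewrite (i_b Is) -/S.
  have : 0 <= \sum_(e in L) d v e by apply: sumr_ge0 => e eL; apply: dS; apply: (subsetP LS).
  lra.
have [G [y [H1 H2 H3 H4]]] := i_out Is Wv.
rewrite -/S in H4.
pose S' := S :&: G.
have hS : \sum_(e in S) d v e = \sum_(e in S') d v e + \sum_(e in S :\: G) d v e.
  by rewrite (big_setID (A := S) G).
have hy : \sum_(e in S') y e * d v e <= \sum_(e in G) y e * d v e.
  apply: sum_sub; first exact: subsetIr.
  by move=> e eG; case: (H1 e eG) => Hi /andP[y0 _]; apply: mulr_ge0 => //; apply: Hd.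
have hk : \sum_(e in S') (1 - y e) * d v e <= \sum_(e in L) d v e.
  apply: (@knap R E k (d v) (fun e => 1 - y e) S S' L) => //.
  - exact: subsetIl.
  - move=> e; rewrite inE => /andP[_ eG]; case: (H1 e eG) => _ /andP[y0 y1].
    by apply/andP; split; lra.
  - apply: le_trans H2; apply: sum_sub; first exact: subsetIr.
    by move=> e eG; case: (H1 e eG) => _ /andP[_ y1]; rewrite subr_ge0.
have hsplit : \sum_(e in S') (1 - y e) * d v e = \sum_(e in S') d v e - \sum_(e in S') y e * d v e.
  by rewrite -sumrB; apply: eq_bigr => e _; ring.
lra.
Qed.

End Main.


Unset Implicit Arguments.

Theorem lemma3 (R : realFieldType) (V E : finType) (inc : V -> E -> bool)
    (k : nat) (b : V -> R) (d : V -> E -> R) (p : E -> R)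
    (indep : {set E} -> bool) :
  (forall e : E, #|[set v | inc v e]| <= k)%N ->
  (forall v, 0 <= b v) ->
  (forall v e, inc v e -> 0 <= d v e) ->
  (forall e, 0 <= p e) ->
  is_matroid indep ->
  (forall s, reachable inc d p (init_state indep b) s -> sF s != set0 ->
     exists s', step inc d p s s') /\
  (forall s, reachable inc d p (init_state indep b) s -> sF s = set0 ->
     indep (sM s) /\
     forall (v : V) (L : {set E}), top_demand inc d k (sM s) v L ->
       \sum_(e in deltaF inc (sM s) v :\: L) d v e <= b v).
Proof.
move=> Hk Hb Hd Hp Hind; split.
- move=> s Hr HF; exact: (progress Hk Hb Hd Hind Hr HF).
- move=> s Hr _; exact: (final Hk Hb Hd Hind Hr).
Qed.
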